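(* Let $d\ge 2$ and let $\mathcal D\subseteq\mathbb S_1^{d-1}$ have non-empty interior. Then for every $M\in G$ and $t\in(0,1)$ the set $\mathcal Q_{\mathcal D}(M,t)$ is non-empty and the minimum defining $F_{\mathcal D}(M,t)$ exists and is positive; moreover $F_{\mathcal D}(\gamma M,t)=F_{\mathcal D}(M,t)$ for all $\gamma\in\Gamma$. Hence $F_{\mathcal D}$ is a well-defined function $\Gamma\backslash G\times(0,1)\to\mathbb R_{>0}$.
   Context: $G=\mathrm{SL}(d+1,\mathbb R)$, $\Gamma=\mathrm{SL}(d+1,\mathbb Z)$. Elements of $\mathbb R^{d+1}$ are row vectors $(u,\vec v)$, $u\in\mathbb R$, $\vec v\in\mathbb R^d$; $\mathbb Z^{d+1}M=\{\vec mM:\vec m\in\mathbb Z^{d+1}\}$. For $t\in(0,1)$, $\mathcal Q_{\mathcal D}(M,t)=\{(u,\vec v)\in\mathbb Z^{d+1}M : -t<u<1-t,\ \vec v\in\mathbb R_{>0}\mathcal D\}$ and $F_{\mathcal D}(M,t)=\min\{|\vec v| : (u,\vec v)\in\mathcal Q_{\mathcal D}(M,t)\}$ (Euclidean norm). *)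

(* Defs.v *)
From HB Require Import structures.
From mathcomp Require Import all_boot all_order all_algebra.
From mathcomp Require Import boolp classical_sets reals.
Set Implicit Arguments. Unset Strict Implicit. Unset Printing Implicit Defensive.
Import Order.TTheory GRing.Theory Num.Theory.
Local Open Scope ring_scope.
Local Open Scope classical_set_scope.

Section Defs.
Variable R : realType.
Variable d : nat.

Definition enorm (v : 'rV[R]_d) : R := Num.sqrt (\sum_(i < d) v ord0 i ^+ 2).

Definition sphere : set 'rV[R]_d := [set v | enorm v = 1].

Definition has_nonempty_interior_in_sphere (D : set 'rV[R]_d) : Prop :=
  exists2 x, D x & exists2 e : R, 0 < e &
    forall y, sphere y -> enorm (y - x) < e -> D y.

Definition pos_cone (D : set 'rV[R]_d) : set 'rV[R]_d :=
  [set v | exists r : R, 0 < r /\ exists2 w, D w & v = r *: w].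

Definition ucomp (x : 'rV[R]_(1 + d)) : R := lsubmx x ord0 ord0.
Definition vcomp (x : 'rV[R]_(1 + d)) : 'rV[R]_d := rsubmx x.

Definition lattice (M : 'M[R]_(1 + d)) : set 'rV[R]_(1 + d) :=
  [set x | exists m : 'rV[int]_(1 + d), x = map_mx intr m *m M].

Definition QD (D : set 'rV[R]_d) (M : 'M[R]_(1 + d)) (t : R) : set 'rV[R]_(1 + d) :=
  [set x | lattice M x /\ - t < ucomp x < 1 - t /\ pos_cone D (vcomp x)].

(* F_D(M,t) = min { |v| : (u,v) in Q_D(M,t) }, defined as the infimum
   (the theorem asserts that the infimum is attained, i.e. is a minimum). *)
Definition FD (D : set 'rV[R]_d) (M : 'M[R]_(1 + d)) (t : R) : R :=
  inf [set enorm (vcomp x) | x in QD D M t].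

End Defs.

(* Main.v *)
Require Import Defs.
From HB Require Import structures.
From mathcomp Require Import all_boot all_order all_algebra.
From mathcomp Require Import boolp classical_sets reals.
From mathcomp Require Import ring lra zify.
Import Order.TTheory GRing.Theory Num.Theory.
Set Implicit Arguments. Unset Strict Implicit.
Local Open Scope ring_scope.
Local Open Scope classical_set_scope.


Lemma sumsq_ge0 (R : realType) (d : nat) (f : 'I_d -> R) : 0 <= \sum_(j < d) f j ^+ 2.
Proof. by apply: sumr_ge0 => j _; rewrite sqr_ge0. Qed.

Lemma enorm_sq (R : realType) (d : nat) (v : 'rV[R]_d) :
  enorm v ^+ 2 = \sum_(j < d) v ord0 j ^+ 2.
Proof. by rewrite /enorm sqr_sqrtr // sumsq_ge0. Qed.

Lemma enorm_ge0 (R : realType) (d : nat) (v : 'rV[R]_d) : 0 <= enorm v.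
Proof. exact: sqrtr_ge0. Qed.

Lemma term_le_sum (R : realType) (d : nat) (f : 'I_d -> R) j :
  (forall i, 0 <= f i) -> f j <= \sum_(i < d) f i.
Proof.
move=> h; rewrite (bigD1 j) //= lerDl; by apply: sumr_ge0.
Qed.

Lemma coord_le_enorm (R : realType) (d : nat) (v : 'rV[R]_d) j :
  `|v ord0 j| <= enorm v.
Proof.
rewrite -sqrtr_sqr /enorm ler_sqrt ?sumsq_ge0 //.
by rewrite (bigD1 j) //= lerDl; apply: sumr_ge0 => i _; rewrite sqr_ge0.
Qed.

Lemma enormZ (R : realType) (d : nat) (r : R) (v : 'rV[R]_d) :
  enorm (r *: v) = `|r| * enorm v.
Proof.
rewrite /enorm.
have -> : \sum_(j < d) (r *: v) ord0 j ^+ 2 = r ^+ 2 * \sum_(j < d) v ord0 j ^+ 2.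
  by rewrite mulr_sumr; apply: eq_bigr => j _; rewrite mxE exprMn.
by rewrite sqrtrM ?sqr_ge0 // sqrtr_sqr.
Qed.

Lemma sphere_sum (R : realType) (d : nat) (x : 'rV[R]_d) :
  sphere x -> \sum_(j < d) x ord0 j ^+ 2 = 1.
Proof. by rewrite /sphere /= => h; rewrite -enorm_sq h expr1n. Qed.

Lemma sphere_coord (R : realType) (d : nat) (x : 'rV[R]_d) j :
  sphere x -> `|x ord0 j| <= 1.
Proof. by move=> h; rewrite -h coord_le_enorm. Qed.

Lemma cone_pos (R : realType) (d : nat) (D : set 'rV[R]_d) v :
  D `<=` sphere (d:=d) -> pos_cone D v -> 0 < enorm v.
Proof.
move=> DS [r [r0 [w Dw ->]]].
by rewrite enormZ (DS _ Dw) mulr1 gtr0_norm.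
Qed.

Lemma ord1E (a : 'I_1) : a = ord0.
Proof. by apply: val_inj; case: a => [[]]. Qed.


Lemma cone_lem (R : realType) (d : nat) (D : set 'rV[R]_d) (x0 v : 'rV[R]_d) (e lam : R) :
  (0 < d)%N -> sphere x0 -> 0 < e ->
  (forall y, sphere y -> enorm (y - x0) < e -> D y) -> 0 < lam ->
  (forall j, `|v ord0 j - lam * x0 ord0 j| <= (Num.min e 1) ^+ 2 / (8 * d%:R) * lam) ->
  pos_cone D v.
Proof.
move=> d0 sx0 e0 hD l0 herr.
set m := Num.min e 1.
have m0 : 0 < m by rewrite lt_min e0 ltr01.
have me : m <= e by rewrite ge_min lexx.
have m1 : m <= 1 by rewrite ge_min lexx orbT.
set E := m ^+ 2.
have E0 : 0 < E by rewrite exprn_gt0.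
have Ee : E <= e ^+ 2 by rewrite /E; nra.
have E1 : E <= 1 by rewrite /E; nra.
set tau := E / 8.
have tau0 : 0 < tau by rewrite /tau; lra.
have tau1 : 8 * tau = E by rewrite /tau; lra.
have dpos : 1 <= (d%:R : R) by rewrite ler1n.
set c := E / (8 * d%:R) * lam.
have hcd : c * d%:R = tau * lam.
  by rewrite /c /tau; field; lra.
have c0 : 0 <= c by nra.
have ctl : c <= tau * lam by nra.
have sumc : \sum_(j < d) c = tau * lam by rewrite sumr_const card_ord -mulr_natr.
set err := fun j => v ord0 j - lam * x0 ord0 j.
have Sx := sphere_sum sx0.
have hx j : `|x0 ord0 j| <= 1 := sphere_coord j sx0.
have herr' j : - c <= err j <= c by rewrite -ler_norml; exact: herr.
have h1 j : - c <= err j * x0 ord0 j <= c.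
  rewrite -ler_norml normrM -[c]mulr1; apply: ler_pM => //; try exact: normr_ge0; exact: herr.
have h2 j : err j ^+ 2 <= c * c by have := herr' j; case/andP => a b; nra.
set sE := \sum_(j < d) err j * x0 ord0 j.
have sEl : - (tau * lam) <= sE.
  rewrite -sumc -sumrN; apply: ler_sum => j _; by case/andP: (h1 j).
have sEu : sE <= tau * lam.
  rewrite -sumc; apply: ler_sum => j _; by case/andP: (h1 j).
have sE2 : \sum_(j < d) err j ^+ 2 <= (tau * lam) ^+ 2.
  apply: (le_trans (ler_sum _ (fun j _ => h2 j))).
  rewrite sumr_const card_ord -mulr_natr -mulrA hcd; nra.
set dot := \sum_(j < d) v ord0 j * x0 ord0 j.
have dotE : dot = lam + sE.
  rewrite /dot /sE {1}(_ : lam = lam * \sum_(j < d) x0 ord0 j ^+ 2); last by rewrite Sx mulr1.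
  rewrite mulr_sumr -big_split /=.
  by apply: eq_bigr => j _; rewrite /err; ring.
set nv := \sum_(j < d) v ord0 j ^+ 2.
have nvE : nv = lam ^+ 2 + 2 * lam * sE + \sum_(j < d) err j ^+ 2.
  rewrite /nv /sE {1}(_ : lam ^+ 2 = lam ^+ 2 * \sum_(j < d) x0 ord0 j ^+ 2); last by rewrite Sx mulr1.
  rewrite mulr_sumr mulr_sumr -!big_split /=.
  by apply: eq_bigr => j _; rewrite /err; ring.
have nvle : nv <= (lam * (1 + tau)) ^+ 2 by rewrite nvE; nra.
have dotpos : lam * (1 - tau) <= dot by rewrite dotE; nra.
have nv0 : 0 < nv.
  rewrite lt0r sumsq_ge0 andbT; apply/eqP => nv0.
  have vz j : v ord0 j = 0.
    apply/eqP; rewrite -sqrf_eq0; apply/eqP.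
    by apply: (psumr_eq0P _ nv0) => // i _; rewrite sqr_ge0.
  have : dot = 0 by rewrite /dot big1 // => j _; rewrite vz mul0r.
  move=> h; rewrite h in dotpos; nra.
set n := Num.sqrt nv.
have n0 : 0 < n by rewrite sqrtr_gt0.
have nle : n <= lam * (1 + tau).
  have := nvle; rewrite -(ler_sqrt nv) ?sqr_ge0 // sqrtr_sqr ger0_norm //; nra.
have n2 : n ^+ 2 = nv by rewrite sqr_sqrtr // ltW.
set w := n^-1 *: v.
have wE j : w ord0 j = v ord0 j / n by rewrite mxE mulrC.
have sw : \sum_(j < d) w ord0 j ^+ 2 = 1.
  under eq_bigr => j _ do rewrite wE expr_div_n.
  rewrite -mulr_suml -/nv -n2 divff //; rewrite sqrf_eq0; exact: lt0r_neq0.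
have wx : \sum_(j < d) w ord0 j * x0 ord0 j = dot / n.
  rewrite /dot mulr_suml; apply: eq_bigr => j _; by rewrite wE mulrAC.
have dist : \sum_(j < d) (w - x0) ord0 j ^+ 2 = 2 - 2 * (dot / n).
  rewrite -wx.
  have -> : \sum_(j < d) (w - x0) ord0 j ^+ 2 =
    \sum_(j < d) w ord0 j ^+ 2 + \sum_(j < d) x0 ord0 j ^+ 2
      - 2 * \sum_(j < d) w ord0 j * x0 ord0 j.
    rewrite mulr_sumr -big_split -sumrB /=; apply: eq_bigr => j _; rewrite !mxE; ring.
  by rewrite sw Sx.
have key : 2 - 2 * (dot / n) < E.
  have h : n * (1 - E / 2) < dot by nra.
  have hk2 : 1 - E / 2 < dot / n by rewrite ltr_pdivlMr // mulrC.
  lra.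
exists n; split => //; exists w.
  apply: hD.
    by rewrite /sphere /= /enorm sw sqrtr1.
  rewrite /enorm dist -(ger0_norm (ltW e0)) -sqrtr_sqr ltr_sqrt; last by rewrite exprn_gt0.
  exact: lt_le_trans key Ee.
by rewrite /w scalerA divff ?scale1r // gt_eqF.
Qed.


Definition invC (R : realType) (n : nat) (M : 'M[R]_n) : R :=
  \sum_(l < n) \sum_(i < n) `|invmx M l i|.

Lemma invC_ge0 (R : realType) (n : nat) (M : 'M[R]_n) : 0 <= invC M.
Proof. by apply: sumr_ge0 => l _; apply: sumr_ge0 => i _; exact: normr_ge0. Qed.

Lemma coord_bound (R : realType) (n : nat) (M : 'M[R]_n) (m : 'rV[int]_n) (X : R) :
  M \in unitmx -> 0 <= X ->
  (forall l, `|(map_mx intr m *m M) ord0 l| <= X) ->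
  forall i, `|(m ord0 i)%:~R : R| <= X * invC M.
Proof.
move=> uM X0 hX i.
have -> : (m ord0 i)%:~R = ((map_mx intr m *m M) *m invmx M) ord0 i.
  by rewrite mulmxK // mxE.
rewrite mxE; apply: (le_trans (ler_norm_sum _ _ _)).
apply: (@le_trans _ _ (\sum_(l < n) X * `|invmx M l i|)).
  apply: ler_sum => l _; rewrite normrM; apply: ler_wpM2r => //; exact: hX.
rewrite -mulr_sumr; apply: ler_wpM2l => //; apply: ler_sum => l _.
by rewrite (bigD1 i) //= lerDl; apply: sumr_ge0 => j _; exact: normr_ge0.
Qed.

Lemma discrete (R : realType) (n : nat) (M : 'M[R]_n) (m : 'rV[int]_n) :
  M \in unitmx -> m != 0 ->
  exists l, (invC M + 1)^-1 <= `|(map_mx intr m *m M) ord0 l|.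
Proof.
move=> uM mn0; apply: contrapT => hn.
have hl l : `|(map_mx intr m *m M) ord0 l| <= (invC M + 1)^-1.
  apply: contrapT => h; apply: hn; exists l.
  by move/negP: h; rewrite -ltNge => /ltW.
have C0 := invC_ge0 M.
move/eqP: mn0; apply; apply/matrixP => a i; rewrite (ord1 a) mxE.
have := coord_bound uM _ hl i; rewrite invr_ge0 => /(_ (ltW (ltr_wpDl C0 ltr01))).
have -> : (invC M + 1)^-1 * invC M = 1 - (invC M + 1)^-1.
  by field; apply: lt0r_neq0; lra.
have : 0 < (invC M + 1)^-1 by rewrite invr_gt0; lra.
rewrite -intr_norm => pa pb.
have : `|m ord0 i|%:~R < (1 : R) by lra.
rewrite -[1 : R]/(1%:~R) ltr_int => h.
have : `|m ord0 i| == 0 by lia.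
by rewrite normr_eq0 => /eqP.
Qed.


Lemma pigeon (R : realType) (p q : nat) (a : 'I_p -> 'I_q -> R) (eta : R) :
  (q < p)%N -> 0 < eta ->
  exists m : 'rV[int]_p, m != 0 /\
    forall j, `|\sum_(i < p) (m ord0 i)%:~R * a i j| < eta.
Proof.
move=> qp eta0.
set A := \sum_(i < p) \sum_(j < q) `|a i j|.
have A0 : 0 <= A by apply: sumr_ge0 => i _; apply: sumr_ge0 => j _; exact: normr_ge0.
have hA j : \sum_(i < p) `|a i j| <= A.
  apply: ler_sum => i _; rewrite (bigD1 j) //= lerDl.
  by apply: sumr_ge0 => k _; exact: normr_ge0.
set P := 2 * A / eta + 1.
have Ae : 0 <= A / eta by rewrite divr_ge0 // ltW.
have P0 : 0 <= P by rewrite /P -mulrA; lra.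
set Q := Num.trunc (P ^+ q).
set N := Q.+1.
pose T := {ffun 'I_p -> 'I_N}.
pose phi (f : T) j := \sum_(i < p) (f i : nat)%:R * a i j.
have phib (f : T) j : `|phi f j| <= Q%:R * A.
  apply: (le_trans (ler_norm_sum _ _ _)).
  apply: (@le_trans _ _ (\sum_(i < p) Q%:R * `|a i j|)); last first.
    by rewrite -mulr_sumr; apply: ler_wpM2l => //; exact: hA.
  apply: ler_sum => i _; rewrite normrM ger0_norm // ler_wpM2r //.
  by rewrite ler_nat -ltnS.
set K' := Num.trunc (2 * Q%:R * A / eta).
pose cell (f : T) j := Num.trunc ((phi f j + Q%:R * A) / eta).
have ypos (f : T) j : 0 <= (phi f j + Q%:R * A) / eta.
  apply: divr_ge0; last exact: ltW.
  by have := phib f j; rewrite ler_norml => /andP [h _]; lra.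
have cellb (f : T) j : (cell f j <= K')%N.
  apply: le_truncn; apply: ler_wpM2r; first by rewrite invr_ge0 ltW.
  by have := phib f j; rewrite ler_norml => /andP [_ h]; lra.
pose g (f : T) : {ffun 'I_q -> 'I_K'.+1} := [ffun j => inord (cell f j)].
have [[f1 [f2 [eg nf]]]|noinj] :=
  pselect (exists f1 f2 : T, g f1 = g f2 /\ f1 <> f2); last first.
  exfalso.
  have inj : injective g.
    move=> x y exy; apply: contrapT => nxy; apply: noinj; by exists x, y.
  have := leq_card _ inj; rewrite !card_ffun !card_ord.
  apply/negP; rewrite -ltnNge -(ltr_nat R) !natrX.
  have hK : (K'.+1)%:R <= N%:R * P :> R.
    have hK1 : K'%:R <= 2 * Q%:R * A / eta.
      by rewrite truncn_le divr_ge0 ?mulr_ge0 // ltW.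
    have QN : (Q%:R : R) <= N%:R by rewrite ler_nat.
    have N1 : (1 : R) <= N%:R by rewrite ler1n.
    have : 2 * Q%:R * A / eta <= 2 * N%:R * A / eta.
      apply: ler_wpM2r; first by rewrite invr_ge0 ltW.
      apply: ler_wpM2r => //; nra.
    move=> h2; rewrite -addn1 natrD /P; nra.
  have PN : P ^+ q < N%:R.
    by have /andP [_ ] := truncn_itv (exprn_ge0 q P0).
  have N0 : (0 : R) < N%:R by rewrite ltr0n.
  apply: (@le_lt_trans _ _ ((N%:R * P) ^+ q)).
    by apply: lerXn2r => //; rewrite nnegrE // mulr_ge0 // ltW.
  rewrite exprMn.
  apply: (@lt_le_trans _ _ (N%:R ^+ q * N%:R)).
    by rewrite ltr_pM2l // exprn_gt0.
  rewrite -exprSr -!natrX ler_nat; apply: leq_pexp2l => //.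
exists (\row_i ((f1 i : nat)%:Z - (f2 i : nat)%:Z)); split.
  apply/negP => /eqP hm; apply: nf; apply/ffunP => i; apply: val_inj => /=.
  have := congr1 (fun M : 'rV[int]_p => M ord0 i) hm; rewrite !mxE /=.
  by move=> h; apply/eqP; rewrite -(eqr_nat int); apply/eqP; lia.
move=> j.
have -> : \sum_(i < p) ((\row_i ((f1 i : nat)%:Z - (f2 i : nat)%:Z)) ord0 i)%:~R * a i j
   = phi f1 j - phi f2 j.
  rewrite /phi -sumrB; apply: eq_bigr => i _; rewrite mxE rmorphB /=.
  by rewrite -!pmulrn mulrBl.
have ec : cell f1 j = cell f2 j.
  have := congr1 (fun h : {ffun 'I_q -> 'I_K'.+1} => (h j : nat)) eg.
  by rewrite /g !ffunE /= !inordK // ltnS.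
have := truncn_itv (ypos f1 j); have := truncn_itv (ypos f2 j).
rewrite -/(cell f1 j) -/(cell f2 j) ec.
move=> /andP [a1 a2] /andP [b1 b2].
have : `|(phi f1 j + Q%:R * A) / eta - (phi f2 j + Q%:R * A) / eta| < 1.
  rewrite ltr_norml; apply/andP; split.
    by move: a2 b1; rewrite -addn1 natrD; lra.
  by move: a1 b2; rewrite -addn1 natrD; lra.
have e1 : 0 < eta^-1 by rewrite invr_gt0.
rewrite -mulrBl normrM (gtr0_norm e1) ltr_pdivrMr // mul1r.
suff -> : phi f1 j + Q%:R * A - (phi f2 j + Q%:R * A) = phi f1 j - phi f2 j by [].
by ring.
Qed.


Lemma ucompE (R : realType) (d : nat) (x : 'rV[R]_(1 + d)) :
  ucomp x = x ord0 (lshift d ord0).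
Proof. by rewrite /ucomp mxE. Qed.

Lemma vcompE (R : realType) (d : nat) (x : 'rV[R]_(1 + d)) j :
  vcomp x ord0 j = x ord0 (rshift 1 j).
Proof. by rewrite /vcomp mxE. Qed.

Lemma latE (R : realType) (n : nat) (M : 'M[R]_n) (m : 'rV[int]_n) l :
  (map_mx intr m *m M) ord0 l = \sum_(i < n) (m ord0 i)%:~R * M i l.
Proof. by rewrite mxE; apply: eq_bigr => i _; rewrite mxE. Qed.

Lemma QD_nonempty (R : realType) (d : nat) (D : set 'rV[R]_d)
  (M : 'M[R]_(1 + d)) (t : R) :
  (0 < d)%N -> D `<=` sphere (d:=d) -> has_nonempty_interior_in_sphere D ->
  \det M = 1 -> 0 < t < 1 -> QD D M t !=set0.
Proof.
move=> d0 DS [x0 Dx0 [e e0 hD]] dM /andP [t0 t1].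
have sx0 : sphere x0 := DS _ Dx0.
have Sx := sphere_sum sx0.
have [k xk0] : exists k, x0 ord0 k != 0.
  apply: contrapT => h.
  have : \sum_(j < d) x0 ord0 j ^+ 2 = 0.
    apply: big1 => j _; have : ~~ (x0 ord0 j != 0) by apply/negP => hj; apply: h; exists j.
    by rewrite negbK => /eqP ->; rewrite expr0n.
  by rewrite Sx => /eqP; rewrite oner_eq0.
set al := `|x0 ord0 k|.
have al0 : 0 < al by rewrite normr_gt0.
have al1 : al <= 1 := sphere_coord k sx0.
have uM : M \in unitmx by rewrite unitmxE dM unitr1.
set mu := (invC M + 1)^-1.
have mu0 : 0 < mu by rewrite invr_gt0; have := invC_ge0 M; lra.
set s := Num.min t (1 - t).
have s0 : 0 < s by rewrite lt_min t0 subr_gt0 t1.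
have st : s <= t by rewrite ge_min lexx.
have st1 : s <= 1 - t by rewrite ge_min lexx orbT.
set kap := (Num.min e 1) ^+ 2 / (8 * d%:R).
have dpos : 1 <= (d%:R : R) by rewrite ler1n.
have kap0 : 0 < kap.
  rewrite /kap divr_gt0 ?exprn_gt0 ?lt_min ?e0 ?ltr01 //; lra.
have kap1 : kap <= 1.
  have m1 : Num.min e 1 <= 1 by rewrite ge_min lexx orbT.
  have m0 : 0 <= Num.min e 1 by rewrite le_min (ltW e0) ler01.
  rewrite /kap ler_pdivrMr; last by lra.
  have : Num.min e 1 ^+ 2 <= 1 by rewrite expr2; nra.
  lra.
set eta := Num.min s (kap * mu * al / 2).
have eta0 : 0 < eta.
  rewrite lt_min s0 /=; apply: divr_gt0; last by []. 
  by apply: mulr_gt0 => //; apply: mulr_gt0.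
have etas : eta <= s by rewrite ge_min lexx.
have etak : eta <= kap * mu * al / 2 by rewrite ge_min lexx orbT.
pose a (i : 'I_(1 + d)) (j : 'I_d) : R :=
  if j == k then M i (lshift d ord0)
  else M i (rshift 1 j) * x0 ord0 k - M i (rshift 1 k) * x0 ord0 j.
have [m [mn0 hm]] := pigeon a (ltnSn d) eta0.
set x := map_mx intr m *m M.
set u := x ord0 (lshift d ord0).
set v := fun j => x ord0 (rshift 1 j).
have hu : `|u| < eta.
  have := hm k; rewrite /u /x latE.
  by under eq_bigr => i _ do rewrite /a eqxx.
have hg j : `|v j * x0 ord0 k - v k * x0 ord0 j| <= eta.
  have [->|njk] := eqVneq j k; first by rewrite subrr normr0 ltW.
  apply: ltW; have := hm j; rewrite /v /x !latE.
  under eq_bigr => i _ do rewrite /a (negbTE njk).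
  by rewrite !mulr_suml -sumrB; under eq_bigr => i _ do rewrite mulrBr !mulrA.
have etamu : eta <= mu * al / 2.
  apply: (le_trans etak); have h : 0 <= mu * al by rewrite mulr_ge0 // ltW.
  nra.
have etamu' : eta < mu by nra.
have [l hl] := discrete uM mn0; rewrite -/x -/mu in hl.
have [j0 hj0] : exists j0, mu <= `|v j0|.
  move: hl; rewrite -(splitK l); case: (split l) => [l'|j] /= hl.
    rewrite (ord1E l') in hl; exfalso; move: hl hu; rewrite /u; lra.
  by exists j.
have vk : mu * al / 2 <= `|v k|.
  have := hg j0.
  have := sphere_coord j0 sx0.
  rewrite -/al.
  move=> h1 h2.
  have h3 : `|v j0| * al <= eta + `|v k|.
    rewrite /al -normrM.
    have -> : v j0 * x0 ord0 k = (v j0 * x0 ord0 k - v k * x0 ord0 j0) + v k * x0 ord0 j0.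
      by ring.
    apply: (le_trans (ler_normD _ _)); rewrite (normrM (v k)).
    have := normr_ge0 (v k); nra.
  nra.
set lam := v k / x0 ord0 k.
have laml : mu / 2 <= `|lam|.
  rewrite /lam normrM normfV -/al ler_pdivlMr //.
  by move: vk; rewrite mulrAC.
have herr j : `|v j - lam * x0 ord0 j| <= kap * `|lam|.
  have -> : v j - lam * x0 ord0 j = (v j * x0 ord0 k - v k * x0 ord0 j) / x0 ord0 k.
    by rewrite /lam; field.
  rewrite normrM normfV -/al ler_pdivrMr //.
  apply: (le_trans (hg j)); apply: (le_trans etak).
  have : 0 <= kap by apply: ltW.
  nra.
have fin : forall y, lattice M y -> `|y ord0 (lshift d ord0)| < eta ->
    forall lm, 0 < lm -> (forall j, `|y ord0 (rshift 1 j) - lm * x0 ord0 j| <= kap * lm) ->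
    QD D M t y.
  move=> y ly hy lm lm0 hlm; split => //; split.
    by rewrite ucompE; move: hy; rewrite ltr_norml => /andP [h1 h2]; apply/andP; split; lra.
  apply: (cone_lem d0 sx0 e0 hD lm0) => j; rewrite vcompE; exact: hlm.
have [lpos|lneg] := ltrP 0 lam.
  exists x; apply: (fin x _ _ lam lpos).
  - by exists m.
  - exact: hu.
  - by move=> j; have := herr j; rewrite (gtr0_norm lpos).
have lneg' : lam < 0.
  rewrite lt_neqAle lneg andbT; apply/eqP => l0; move: laml; rewrite l0 normr0; lra.
exists (- x); apply: (fin (- x) _ _ (- lam)).
- by exists (- m); rewrite map_mxN mulNmx.
- by rewrite mxE normrN.
- by rewrite oppr_gt0.
- move=> j; rewrite mxE; have := herr j; rewrite (ltr0_norm lneg').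
  by rewrite -normrN opprB mulNr opprK addrC.
Qed.


Lemma QD_min (R : realType) (d : nat) (D : set 'rV[R]_d)
  (M : 'M[R]_(1 + d)) (t : R) :
  D `<=` sphere (d:=d) -> \det M = 1 -> 0 < t < 1 -> QD D M t !=set0 ->
  exists2 x, QD D M t x &
    forall y, QD D M t y -> enorm (vcomp x) <= enorm (vcomp y).
Proof.
move=> DS dM /andP [t0 t1] [x1 Qx1].
have uM : M \in unitmx by rewrite unitmxE dM unitr1.
set B := enorm (vcomp x1).
have B0 : 0 <= B := enorm_ge0 _.
set X := 1 + B.
set N := Num.trunc (X * invC M).
have XC0 : 0 <= X * invC M by rewrite mulr_ge0 ?invC_ge0 //; rewrite /X; lra.
have bnd : forall y, QD D M t y -> enorm (vcomp y) <= B ->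
    exists m : 'rV[int]_(1 + d), y = map_mx intr m *m M /\
      forall i, `|m ord0 i| <= N%:Z.
  move=> y [[m ->] [hu _]] hv; exists m; split => // i.
  have hc : forall l, `|(map_mx intr m *m M) ord0 l| <= X.
    move=> l; rewrite -(splitK l); case: (split l) => [l'|j] /=.
      rewrite (ord1E l') -ucompE; move: hu => /andP [h1 h2].
      rewrite ler_norml; apply/andP; split; rewrite /X; lra.
    rewrite -vcompE; apply: (le_trans (coord_le_enorm _ _)).
    by rewrite /X; lra.
  have := coord_bound uM (ltW (ltr_wpDr B0 ltr01)) hc i.
  rewrite -intr_norm -abszE => h.
  have : (`|m ord0 i|%N <= N)%N by rewrite truncn_ge_nat.
  lia.
pose T := {ffun 'I_(1 + d) -> 'I_(N + N).+1}.
pose pt (f : T) : 'rV[R]_(1 + d) :=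
  map_mx intr (\row_i ((f i : nat)%:Z - N%:Z)) *m M.
have rep : forall y, QD D M t y -> enorm (vcomp y) <= B -> exists f : T, pt f = y.
  move=> y Qy hy; have [m [-> hm]] := bnd y Qy hy.
  exists [ffun i => inord (absz (m ord0 i + N%:Z))]; rewrite /pt; apply: (congr1 (fun z => map_mx intr z *m M)).
  apply/matrixP => a i; rewrite (ord1E a) !mxE ffunE inordK.
    have := hm i; lia.
  have := hm i; lia.
pose F (f : T) := enorm (vcomp (pt f)).
pose PP (f : T) := `[< QD D M t (pt f) /\ F f <= B >].
have [f1 e1] := rep x1 Qx1 (lexx _).
have P1 : PP f1 by apply/asboolP; rewrite /F e1.
case: (arg_minP F P1) => fs /asboolP [Qfs Bfs] hmin.
exists (pt fs) => // y Qy.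
have [hy|hy] := leP (enorm (vcomp y)) B.
  have [f ef] := rep y Qy hy; rewrite -ef; apply: hmin.
  by apply/asboolP; rewrite /F ef.
exact: (le_trans Bfs (ltW hy)).
Qed.


Lemma lattice_gamma (R : realType) (d : nat) (M : 'M[R]_(1 + d)) (g : 'M[int]_(1 + d)) :
  \det g = 1 -> lattice (map_mx intr g *m M) = lattice M.
Proof.
move=> dg; have ug : g \in unitmx by rewrite unitmxE dg unitr1.
apply/seteqP; split => x [m ->].
  by exists (m *m g); rewrite map_mxM mulmxA.
exists (m *m invmx g); rewrite mulmxA -map_mxM mulmxKV //.
Qed.

Lemma FD_eq (R : realType) (d : nat) (D : set 'rV[R]_d) (M : 'M[R]_(1 + d)) (t : R) x :
  QD D M t x -> (forall y, QD D M t y -> enorm (vcomp x) <= enorm (vcomp y)) ->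
  FD D M t = enorm (vcomp x).
Proof.
move=> Qx hmin; rewrite /FD; apply/eqP; rewrite eq_le; apply/andP; split.
  have hl : has_lbound [set enorm (vcomp y) | y in QD D M t].
    by exists (enorm (vcomp x)) => _ [y Qy <-]; exact: hmin.
  by apply: (ge_inf hl); exists x.
apply: lb_le_inf; first by exists (enorm (vcomp x)), x.
by move=> _ [y Qy <-]; exact: hmin.
Qed.

Unset Implicit Arguments. Set Strict Implicit.

Theorem proposition2p1 (R : realType) (d : nat) (D : set 'rV[R]_d) :
  (2 <= d)%N ->
  D `<=` sphere (d:=d) ->
  has_nonempty_interior_in_sphere D ->
  forall (M : 'M[R]_(1 + d)) (t : R), \det M = 1 -> 0 < t < 1 ->
    [/\ QD D M t !=set0,
        (exists2 x, QD D M t x &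
           forall y, QD D M t y -> enorm (vcomp x) <= enorm (vcomp y)),
        (exists2 x, QD D M t x & enorm (vcomp x) = FD D M t),
        0 < FD D M t
      & forall gamma : 'M[int]_(1 + d), \det gamma = 1 ->
          FD D (map_mx intr gamma *m M) t = FD D M t].
Proof.
move=> d2 DS hint M t dM ht.
have d0 : (0 < d)%N by apply: leq_trans d2.
have Qn := QD_nonempty d0 DS hint dM ht.
have [xs Qxs hmin] := QD_min DS dM ht Qn.
have hF := FD_eq Qxs hmin.
split => //.
- by exists xs.
- exists xs => //.
- by rewrite hF; case: Qxs => _ [_ hc]; exact: cone_pos DS hc.
- move=> g dg; rewrite /FD.
  have -> : QD D (map_mx intr g *m M) t = QD D M t.
    by rewrite /QD lattice_gamma.
  by [].
Qed.
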